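(* Let $p>3$ be a prime and $t\in\mathbb Z_p$. Then $$P_{\frac{p-1}2}(t)\equiv\sum_{k=0}^{\frac{p-1}2}\binom{2k}k^2\Big(\frac{1-t}{32}\Big)^k\equiv-\Big(\frac{-6}p\Big)\sum_{x=0}^{p-1}\Big(\frac{x^3-3(t^2+3)x+2t(t^2-9)}p\Big)\pmod p.$$
   Context: $\mathbb Z_p$ denotes the set of rational numbers whose denominator (in lowest terms) is prime to $p$; congruences are in this ring. For $a\in\mathbb Z_p$, $\big(\frac ap\big)$ is the Legendre symbol of the residue of $a$ modulo $p$ (equal to $0$ if $p\mid a$). $P_n(x)$ is the $n$-th Legendre polynomial, defined by $\frac1{\sqrt{1-2xt+t^2}}=\sum_{n\ge0}P_n(x)t^n$, equivalently $P_n(x)=\frac1{2^n}\sum_{k=0}^{[n/2]}\frac{(-1)^k(2n-2k)!}{k!(n-k)!(n-2k)!}x^{n-2k}$. *)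

(* Defs.v *)
From mathcomp Require Import all_boot all_order all_algebra.
Set Implicit Arguments. Unset Strict Implicit. Unset Printing Implicit Defensive.
Import Order.TTheory GRing.Theory Num.Theory.
Local Open Scope ring_scope.

(* Z_p : rationals whose denominator (in lowest terms) is prime to p. *)
Definition in_Zp (p : nat) (a : rat) : bool := coprime `|denq a|%N p.

Definition congp (p : nat) (a b : rat) : Prop := in_Zp p ((a - b) / p%:R).

Definition legendre_int (p : nat) (m : int) : int :=
  if (p%:Z %| m)%Z then 0
  else if [exists x : 'I_p, (p%:Z %| (x%:Z) ^+ 2 - m)%Z] then 1 else -1.

(* Legendre symbol of the residue mod p of a in Z_p: the residue of
   numq a / denq a is represented by numq a * denq a ^ (p-2). *)
Definition legendre (p : nat) (a : rat) : int :=
  legendre_int p (numq a * denq a ^+ (p - 2)%N).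

Definition legendreP (n : nat) (x : rat) : rat :=
  (2 ^+ n)^-1 * \sum_(0 <= k < n./2.+1)
    (-1) ^+ k * ((2 * n - 2 * k)`!)%:R
      / ((k`!)%:R * ((n - k)`!)%:R * ((n - 2 * k)`!)%:R) * x ^+ (n - 2 * k).

(* Main.v *)
Require Import Defs.
From mathcomp Require Import all_boot all_order all_algebra all_field all_solvable.
From mathcomp Require Import ring zify.
Import Order.TTheory GRing.Theory Num.Theory.
Local Open Scope ring_scope.
Set Implicit Arguments. Unset Strict Implicit.

Lemma shuffle4 (R' : comNzRingType) (a s x y : R') : a * x * s * y = s * (y * x) * a.
Proof. ring. Qed.

Lemma shuffle5 (R' : comNzRingType) (a b c d : R') : a * c * (b * d * c) = a * b * (c * c * d).
Proof. ring. Qed.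


Lemma central_rec k : (k.+1 * 'C(k.*2.+2, k.+1) = 2 * k.*2.+1 * 'C(k.*2, k))%N.
Proof.
apply/eqP; rewrite -(eqn_pmul2r (_ : 0 < k`! * (k.+1)`!)%N) ?muln_gt0 ?fact_gt0 //.
have h1 := bin_fact (leq_addr k k); rewrite addnK addnn in h1.
have h2 := bin_fact (leq_addr k.+1 k.+1); rewrite addnK addnn doubleS in h2.
rewrite !factS in h2 *.
move: h1 h2; generalize 'C(k.*2, k) 'C(k.*2.+2, k.+1) (k`!) (k.*2)`! => b c a f h1 h2.
apply/eqP; nia.
Qed.

Lemma fact_ndvd p m : prime p -> (m < p)%N -> ~~ (p %| m`!)%N.
Proof.
move=> pr; elim: m => [|m IH] h; first by rewrite dvdn1; case: eqP pr => // ->.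
rewrite factS Euclid_dvdM // negb_or IH ?andbT; last exact: ltnW.
by apply/negP => /dvdn_leq; move=> /(_ isT); rewrite leqNgt h.
Qed.

Lemma keyF (R' : comNzRingType) (nn kk : R') : 2 * nn + 1 = 0 -> (nn - kk) * (-4) = 2 * (2 * kk + 1).
Proof.
move=> h; have -> : (nn - kk) * (-4) = 2 * (2 * kk + 1) - 2 * (2 * nn + 1) by ring.
by rewrite h mulr0 subr0.
Qed.


Lemma idB (K : fieldType) (w T : K) : (2 : K) != 0 ->
  (-2 * w + (1 - T)) * ((-2 * w + (1 - T) + T) ^+ 2 - 1) = -8 * (w * ((w - 1) * (w - (1 - T) / 2))).
Proof. move=> h2; field; exact: h2. Qed.

Lemma idE (K : comNzRingType) (v T : K) :
  (-3 * v - 2 * T) ^+ 3 - 3 * (T ^+ 2 + 3) * (-3 * v - 2 * T) + 2 * T * (T ^+ 2 - 9)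
  = -27 * (v * ((v + T) ^+ 2 - 1)).
Proof. ring. Qed.


Lemma idD (K : fieldType) (a x : K) k : (2 : K) != 0 ->
  (a * (-4) ^+ k) ^+ 2 * (x / 32) ^+ k = a ^+ 2 * (x / 2) ^+ k.
Proof.
move=> h; rewrite exprMn -exprM mulnC exprM -mulrA -exprMn; congr (_ * (_ ^+ _)).
have h32 : (32 : K) != 0.
  have -> : (32 : K) = 2 ^+ 5 by rewrite -natrX.
  by rewrite expf_neq0.
by field; rewrite h h32.
Qed.


Lemma idPH (K : fieldType) (n : nat) (P H : K) : (2 : K) != 0 -> (2 : K) ^+ (2 * n) = 1 ->
  (-8) ^+ n * - ((-1) ^+ n * H) = - (2 ^+ n * P) -> P = H.
Proof.
move=> h2 h4 e.
have e8 : (-8 : K) ^+ n * (-1) ^+ n = 2 ^+ n.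
  rewrite -exprMn (_ : (-8 : K) * (-1) = 2 * 2 ^+ 2); last by ring.
  by rewrite exprMn -exprM h4 mulr1.
move: e; rewrite mulrN mulrA e8 => /oppr_inj /(mulfI (expf_neq0 _ h2)) ->; done.
Qed.

Lemma idF (K : comNzRingType) (n : nat) (P : K) : (18 : K) ^+ (2 * n) = 1 ->
  - ((-6) ^+ n * ((-27) ^+ n * - (2 ^+ n * P))) = P.
Proof.
move=> h; rewrite !mulrN opprK !mulrA -!exprMn.
rewrite (_ : (-6 : K) * (-27) * 2 = 18 ^+ 2); last by ring.
by rewrite -exprM h mul1r.
Qed.


Lemma fact_id n k : (2 * k <= n)%N ->
  ('C(n, k) * 'C(2 * n - 2 * k, n) * (k`! * (n - k)`! * (n - 2 * k)`!) = (2 * n - 2 * k)`!)%N.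
Proof.
move=> hk.
have h1 := @bin_fact n k ltac:(lia).
have h2 := @bin_fact (2 * n - 2 * k)%N n ltac:(lia).
have e : (2 * n - 2 * k - n = n - 2 * k)%N by lia.
rewrite e in h2.
apply/eqP; rewrite -(eqn_pmul2r (fact_gt0 n)); apply/eqP.
rewrite -h2 -{2}h1.
move: h1 h2; generalize 'C(n, k) 'C(2 * n - 2 * k, n) (k`!) ((n - k)`!) ((n - 2 * k)`!) (n`!).
move=> a b c d f g _ _; nia.
Qed.

Lemma legendreP_bin n (x : rat) : legendreP n x =
  (2 ^+ n)^-1 * \sum_(k < n.+1) (-1) ^+ k * ('C(n, k) * 'C(2 * n - 2 * k, n))%:R * x ^+ (n - 2 * k).
Proof.
rewrite /legendreP; congr (_ * _).
rewrite -(big_mkord xpredT (fun k => (-1) ^+ k * ('C(n, k) * 'C(2 * n - 2 * k, n))%:R * x ^+ (n - 2 * k))).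
rewrite (@big_cat_nat _ _ _ n./2.+1 0 n.+1) //=; last by rewrite ltnS leq_half_double -addnn; apply: leqW; apply: leq_addr.
rewrite [X in _ = _ + X]big1_seq ?addr0; last first.
  move=> k /andP[_]; rewrite mem_index_iota => /andP[h1 h2].
  have : (2 * n - 2 * k < n)%N.
    have := odd_double_half n; have : (odd n <= 1)%N by case: odd.
    rewrite -mul2n; lia.
  by move=> /bin_small ->; rewrite muln0 mulr0 mul0r.
apply: eq_big_nat => k; rewrite ltnS => /andP[_ hk0].
have hk : (2 * k <= n)%N.
  have := odd_double_half n; have : (odd n <= 1)%N by case: odd.
  rewrite -mul2n; lia.
have e : (2 * n - 2 * k)`!%:R / (k`!%:R * (n - k)`!%:R * (n - 2 * k)`!%:R)
           = ('C(n, k) * 'C(2 * n - 2 * k, n))%:R :> rat.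
  have eB : k`!%:R * (n - k)`!%:R * (n - 2 * k)`!%:R = (k`! * (n - k)`! * (n - 2 * k)`!)%:R :> rat.
    by rewrite !natrM.
  rewrite eB -(@fact_id n k hk) natrM mulfK //.
  by rewrite pnatr_eq0 -lt0n !muln_gt0 !fact_gt0.
by rewrite -[(-1) ^+ k * _ / _]mulrA e.
Qed.

Section Toolkit.
Variable p : nat.
Hypothesis pr : prime p.
Local Notation F := 'F_p.

Lemma charF : p \in [pchar F]. Proof. exact: pchar_Fp. Qed.

Lemma natrF0 n : (n%:R == 0 :> F) = (p %| n)%N.
Proof. by rewrite (dvdn_pcharf charF). Qed.

Lemma intrF0 (z : int) : (z%:~R == 0 :> F) = (p %| `|z|)%N.
Proof.
case: z => n; first by rewrite natrF0.
by rewrite NegzE rmorphN /= oppr_eq0 natrF0.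
Qed.

Lemma in_ZpE a : in_Zp p a = ~~ (p %| `|denq a|)%N.
Proof. by rewrite /in_Zp coprime_sym prime_coprime. Qed.

Definition R (x : rat) (y : F) := in_Zp p x /\ ratr x = y.

Lemma R_frac (n d : int) : ~~ (p %| `|d|)%N -> R (n%:~R / d%:~R) (n%:~R / d%:~R).
Proof.
case: (divqP n d) => [_|k x k0]; first by rewrite dvdn0.
rewrite abszM Euclid_dvdM // negb_or => /andP[pk px].
split; first by rewrite in_ZpE.
have k0F : (k%:~R : F) != 0 by rewrite intrF0.
by rewrite /ratr !rmorphM /= invfM mulrACA mulfV ?mul1r.
Qed.

Lemma R_def a : in_Zp p a -> R a (ratr a).
Proof. by []. Qed.

Lemma R_int (z : int) : R z%:~R z%:~R.
Proof. by split; [rewrite /in_Zp denq_int coprime1n | rewrite ratr_int]. Qed.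

Lemma R_nat n : R n%:R n%:R.
Proof. by have := R_int n; rewrite -!pmulrn. Qed.

Lemma numden a : a = (numq a)%:~R / (denq a)%:~R.
Proof. by rewrite divq_num_den. Qed.

Lemma R_ratr a : in_Zp p a -> ratr a = (numq a)%:~R / (denq a)%:~R :> F.
Proof. by []. Qed.

Lemma R_add a b y z : R a y -> R b z -> R (a + b) (y + z).
Proof.
move=> [ha <-] [hb <-]; rewrite in_ZpE in ha; rewrite in_ZpE in hb.
have da : (denq a)%:~R != 0 :> rat by rewrite intr_eq0 denq_neq0.
have db : (denq b)%:~R != 0 :> rat by rewrite intr_eq0 denq_neq0.
have daF : (denq a)%:~R != 0 :> F by rewrite intrF0.
have dbF : (denq b)%:~R != 0 :> F by rewrite intrF0.
have -> : a + b = (numq a * denq b + numq b * denq a)%:~R / (denq a * denq b)%:~R.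
  rewrite {1}(numden a) {1}(numden b) !rmorphD !rmorphM /=; field.
  by rewrite da db.
have H := @R_frac (numq a * denq b + numq b * denq a) (denq a * denq b).
case: H; first by rewrite abszM Euclid_dvdM // negb_or ha hb.
move=> h1 h2; split=> //; rewrite h2 /ratr !rmorphD !rmorphM /=; field.
by rewrite daF dbF.
Qed.

Lemma R_mul a b y z : R a y -> R b z -> R (a * b) (y * z).
Proof.
move=> [ha <-] [hb <-]; rewrite in_ZpE in ha; rewrite in_ZpE in hb.
have da : (denq a)%:~R != 0 :> rat by rewrite intr_eq0 denq_neq0.
have db : (denq b)%:~R != 0 :> rat by rewrite intr_eq0 denq_neq0.
have daF : (denq a)%:~R != 0 :> F by rewrite intrF0.
have dbF : (denq b)%:~R != 0 :> F by rewrite intrF0.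
have -> : a * b = (numq a * numq b)%:~R / (denq a * denq b)%:~R.
  rewrite {1}(numden a) {1}(numden b) !rmorphM /=; field.
  by rewrite da db.
have H := @R_frac (numq a * numq b) (denq a * denq b).
case: H; first by rewrite abszM Euclid_dvdM // negb_or ha hb.
move=> h1 h2; split=> //; rewrite h2 /ratr !rmorphM /=; field.
by rewrite daF dbF.
Qed.

Lemma R_opp a y : R a y -> R (- a) (- y).
Proof.
move=> h; have := R_mul (R_int (-1)) h.
by rewrite !rmorphN /= !rmorph1 !mulN1r.
Qed.

Lemma R_sub a b y z : R a y -> R b z -> R (a - b) (y - z).
Proof. by move=> ha hb; apply: R_add => //; apply: R_opp. Qed.

Lemma R_exp a y n : R a y -> R (a ^+ n) (y ^+ n).
Proof.
move=> h; elim: n => [|n IH]; first by rewrite !expr0; exact: (R_nat 1).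
by rewrite !exprS; apply: R_mul.
Qed.

Lemma R_inv a y : R a y -> y != 0 -> R (a^-1) (y^-1).
Proof.
move=> [ha <-] hy; rewrite in_ZpE in ha.
have hn : ~~ (p %| `|numq a|)%N.
  apply: contra hy; rewrite -intrF0 /ratr => /eqP ->; by rewrite mul0r.
rewrite {1}(numden a) invf_div /ratr invf_div; exact: R_frac.
Qed.

Lemma R_div a b y z : R a y -> R b z -> z != 0 -> R (a / b) (y / z).
Proof. by move=> ha hb hz; apply: R_mul => //; apply: R_inv. Qed.

Lemma R_sum (I : Type) (r : seq I) (P : pred I) (f : I -> rat) (g : I -> F) :
  (forall i, P i -> R (f i) (g i)) ->
  R (\sum_(i <- r | P i) f i) (\sum_(i <- r | P i) g i).
Proof.
move=> h; apply: (big_ind2 R (R_nat 0)) => // ? ? ? ?; exact: R_add.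
Qed.


Lemma R_cong a b y : R a y -> R b y -> congp p a b.
Proof.
move=> ha hb; have [hc c0] : R (a - b) 0 by rewrite -(subrr y); exact: R_sub.
move: hc c0; set c := a - b; rewrite /congp -/c in_ZpE => hc c0.
have dF : (denq c)%:~R != 0 :> F by rewrite intrF0.
have : (numq c)%:~R == 0 :> F.
  by move: c0; rewrite /ratr => /eqP; rewrite mulf_eq0 invr_eq0 (negPf dF) orbF.
rewrite intrF0 => hd; have /divzK hnum : (p%:Z %| numq c)%Z by rewrite dvdzE.
have -> : c / p%:R = ((numq c %/ p)%Z)%:~R / (denq c)%:~R.
  have hp0 : p%:R != 0 :> rat by rewrite pnatr_eq0 -lt0n prime_gt0.
  have hd0 : (denq c)%:~R != 0 :> rat by rewrite intr_eq0 denq_neq0.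
  rewrite {1}(numden c) -{1}hnum rmorphM /= -pmulrn.
  by field; rewrite hp0 hd0.
by case: (@R_frac (numq c %/ p)%Z (denq c) hc).
Qed.

Lemma cardF : #|F| = p. Proof. exact: card_Fp. Qed.

Lemma natrp : p%:R = 0 :> F.
Proof. by apply/eqP; rewrite natrF0. Qed.

Lemma fermat (x : F) : x != 0 -> x ^+ p.-1 = 1.
Proof.
move=> x0; have := expf_card x; rewrite cardF.
have -> : x ^+ p = x * x ^+ p.-1 by rewrite -exprS prednK // prime_gt0.
move=> h; apply: (mulfI x0); rewrite mulr1; exact: h.
Qed.

Lemma primroot : exists g : F, p.-1.-primitive_root g.
Proof.
have p1 : (0 < p.-1)%N by rewrite -ltnS prednK ?prime_gt1 ?prime_gt0.
have : has p.-1.-primitive_root [seq x <- enum F | x != 0].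
  apply: has_prim_root => //.
- apply/allP => x; rewrite mem_filter => /andP[x0 _].
  by rewrite unity_rootE fermat.
- by rewrite filter_uniq // enum_uniq.
- rewrite size_filter.
  have h1 := count_predC (fun x : F => x == 0) (enum F).
  have h2 : count (fun x : F => x == 0) (enum F) = 1%N.
    by rewrite (count_uniq_mem 0 (enum_uniq F)) mem_enum.
  rewrite -cardE cardF h2 in h1.
  have -> : count (fun x : F => x != 0) (enum F) = p.-1.
    have h3 : (1 + count (fun x : F => x != 0%R) (enum F))%N = p := h1.
    by apply: (@addnI 1); rewrite h3 add1n prednK // prime_gt0.
  done.
by case/hasP => g _ hg; exists g.
Qed.


Hypothesis p3 : (3 < p)%N.

Lemma oddp : odd p.
Proof. by case: (even_prime pr) => // ep; move: p3; rewrite ep. Qed.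

Lemma half2 : (p.-1./2).*2 = p.-1.
Proof.
rewrite halfK; have := oddp; rewrite -{1}(prednK (prime_gt0 pr)) /=.
by move/negbTE => ->; rewrite subn0.
Qed.

Lemma half_gt0 : (0 < p.-1./2)%N.
Proof.
rewrite lt0n; apply/eqP => h; have := half2; rewrite h /= => h2.
by move: p3; rewrite -(prednK (prime_gt0 pr)) -h2.
Qed.

Lemma half_lt : (p.-1./2 < p.-1)%N.
Proof. by rewrite -{2}half2 -addnn -{1}(addn0 p.-1./2) ltn_add2l half_gt0. Qed.

Lemma gn (g : F) : p.-1.-primitive_root g -> g ^+ p.-1./2 = -1.
Proof.
move=> hg; have : (g ^+ p.-1./2) ^+ 2 == 1.
  by rewrite -exprM muln2 half2 prim_expr_order.
rewrite sqrf_eq1 => /orP[|/eqP //].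
rewrite -(expr0 g) (eq_prim_root_expr hg) mod0n modn_small ?half_lt //.
by rewrite eqn0Ngt half_gt0.
Qed.

Lemma euler (m : int) : (legendre_int p m)%:~R = (m%:~R : F) ^+ p.-1./2.
Proof.
rewrite /legendre_int; case: ifP => [hd|hnd].
  have /eqP -> : (m%:~R == 0 :> F) by rewrite intrF0; rewrite dvdzE in hd.
  by rewrite expr0n eqn0Ngt half_gt0 /= rmorph0.
have a0 : (m%:~R : F) != 0 by rewrite intrF0 -(@dvdzE p); rewrite hnd.
case: ifP => [/existsP [x hx] | hne].
  have hx2 : (m%:~R : F) = (x%:R) ^+ 2.
    move: hx; rewrite dvdzE -intrF0 rmorphB rmorphXn /= subr_eq0 => /eqP <-.
    by rewrite -pmulrn.
  have x0 : (x%:R : F) != 0 by apply: contra a0; rewrite hx2 => /eqP ->; rewrite expr0n.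
  by rewrite hx2 -exprM mul2n half2 fermat // rmorph1.
have [g hg] := primroot.
have [i hi] := prim_rootP hg (fermat a0).
rewrite hi -exprM mulnC exprM gn // -signr_odd.
case: (boolP (odd i)) => oi; first by rewrite expr1 rmorphN rmorph1.
exfalso; move/negbT: hne; apply/negP; rewrite negbK.
have ie : i = ((i./2).*2)%N :> nat by rewrite halfK (negbTE oi) subn0.
set y := g ^+ i./2.
have yp : (nat_of_ord y < p)%N.
  by have := ltn_ord y; rewrite [X in (_ < X)%N -> _]Fp_cast.
apply/existsP; exists (Ordinal yp); rewrite dvdzE -intrF0 /=.
rewrite rmorphB rmorphXn /= -pmulrn natr_Zp hi /y -exprM muln2 -ie.
by rewrite subrr.
Qed.


Lemma R_legendre a y : R a y -> R (legendre p a)%:~R (y ^+ p.-1./2).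
Proof.
move=> [ha <-]; split; first by case: (R_int (legendre p a)).
rewrite ratr_int /legendre euler; congr (_ ^+ _).
rewrite /ratr rmorphM rmorphXn /=.
have dF : (denq a)%:~R != 0 :> F by rewrite intrF0 -in_ZpE.
congr (_ * _); apply: (mulfI dF); rewrite mulfV // -exprS.
have -> : (p - 2).+1 = p.-1 by rewrite -subSn ?prime_gt1 // subSS subn1.
by rewrite fermat.
Qed.

Lemma sum_pow (j : nat) : \sum_(x : F) x ^+ j = if (0 < j)%N && (p.-1 %| j)%N then -1 else 0.
Proof.
case: j => [|j].
  rewrite /= (eq_bigr (fun _ => 1)) => [|x _]; last by rewrite expr0.
  by rewrite sumr_const cardF natrp.
rewrite /=; case: ifP => hd.
  rewrite (bigD1 0) //= expr0n /= add0r.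
  rewrite (eq_bigr (fun _ => 1)) => [|x x0]; last first.
    case/dvdnP: hd => k ->; by rewrite mulnC exprM fermat // expr1n.
  rewrite sumr_const cardC1 cardF.
  have -> : p.-1 = (p - 1)%N by rewrite subn1.
  by rewrite natrB ?prime_gt0 // natrp sub0r.
have [g hg] := primroot.
have g0 : g != 0.
  apply/negP => /eqP h; have := prim_expr_order hg; rewrite h expr0n.
  by rewrite eqn0Ngt (prim_order_gt0 hg) /= => /eqP; rewrite eq_sym oner_eq0.
have gj : g ^+ j.+1 != 1.
  rewrite -(expr0 g) (eq_prim_root_expr hg) mod0n; apply: contraFN hd.
  by move=> /eqP h; apply/dvdnP; exists (j.+1 %/ p.-1)%N; rewrite {1}(divn_eq j.+1 p.-1) h addn0.
set S := \sum_(x : F) x ^+ j.+1.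
have : S = g ^+ j.+1 * S.
  rewrite /S big_distrr /= (reindex_inj (mulfI g0)) /=.
  by apply: eq_bigr => x _; rewrite exprMn.
move/eqP; rewrite -subr_eq0 -{1}(mul1r S) -mulrBl mulf_eq0 subr_eq0 eq_sym (negPf gj) /=.
by move/eqP.
Qed.


Lemma cond_eq (i : nat) : (i < (p.-1).*2)%N -> ((0 < i) && (p.-1 %| i))%N = (i == p.-1).
Proof.
move=> hi; have p1 : (0 < p.-1)%N by rewrite -ltnS prednK ?prime_gt1 ?prime_gt0.
case: eqP => [->|ne]; first by rewrite p1 dvdnn.
apply/negbTE/negP => /andP[i0 /dvdnP [k ek]].
move: hi i0 ne; rewrite ek -mul2n ltn_pmul2r // muln_gt0 p1 andbT.
by case: k {ek} => [|[|k]] //= _ _; rewrite mul1n.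
Qed.

Lemma sum_poly (q : {poly F}) : (size q <= (p.-1).*2)%N ->
  \sum_(x : F) q.[x] = - q`_(p.-1).
Proof.
move=> hs.
under eq_bigr do rewrite horner_coef.
rewrite exchange_big /=.
under eq_bigr do rewrite -big_distrr sum_pow.
rewrite (eq_bigr (fun i : 'I_(size q) => if nat_of_ord i == p.-1 then - q`_(p.-1) else 0)); last first.
  move=> i _; rewrite cond_eq; last by apply: leq_trans hs.
  by rewrite /=; case: eqP => [->|_]; rewrite ?mulrN1 ?mulr0.
case: (ltnP p.-1 (size q)) => h.
  rewrite (bigD1 (Ordinal h)) //= eqxx big1 ?addr0 // => i hi.
  by rewrite ifN //; apply: contra hi => /eqP e; apply/eqP; apply: val_inj.
rewrite big1 ?nth_default ?oppr0 // => i _.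
by rewrite ifN // neq_ltn (leq_trans (ltn_ord i) h).
Qed.


Lemma sum_eqn (m k : nat) (G : nat -> F) :
  \sum_(i < m) (if nat_of_ord i == k then G i else 0) = if (k < m)%N then G k else 0.
Proof.
case: ifP => h.
  rewrite (bigD1 (Ordinal h)) //= eqxx big1 ?addr0 // => i hi.
  by rewrite ifN //; apply: contra hi => /eqP e; apply/eqP; apply: val_inj.
rewrite big1 // => i _; rewrite ifN //; apply/eqP => e.
by move: (ltn_ord i); rewrite e h.
Qed.

Lemma pX (a : F) j : a%:P ^+ j = (a ^+ j)%:P.
Proof. by rewrite rmorphXn. Qed.

Lemma coef_XaddC_exp (c : F) m k : (('X + c%:P) ^+ m)`_k = c ^+ (m - k) *+ 'C(m, k).
Proof.
rewrite addrC exprDn coef_sum.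
rewrite (eq_bigr (fun i : 'I_m.+1 => if nat_of_ord i == k then c ^+ (m - i) *+ 'C(m, i) else 0)).
  rewrite (sum_eqn m.+1 k (fun i => c ^+ (m - i) *+ 'C(m, i))); case: ifP => // h; by rewrite bin_small ?mulr0n // ltnNge -ltnS h.
move=> i _.
rewrite coefMn pX coefCM coefXn.
by rewrite eq_sym; case: (_ == _); rewrite ?mulr1 ?mulr0 ?mul0rn.
Qed.

Lemma coef_XsubC_exp (c : F) m k : (('X - c%:P) ^+ m)`_k = (- c) ^+ (m - k) *+ 'C(m, k).
Proof. by rewrite -polyCN coef_XaddC_exp. Qed.


Lemma coef_P (T : F) (n : nat) :
  ((('X + T%:P) ^+ 2 - 1) ^+ n)`_n =
  \sum_(k < n.+1) (-1) ^+ k * ('C(n, k) * 'C(2 * n - 2 * k, n))%:R * T ^+ (n - 2 * k).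
Proof.
rewrite exprDn coef_sum; apply: eq_bigr => k _.
have -> : (-1 : {poly F}) ^+ k = ((-1) ^+ k)%:P by rewrite -pX polyCN.
rewrite -exprM coefMn coefMC coef_XaddC_exp.
have -> : (2 * (n - k) - n = n - 2 * k)%N by lia.
have -> : (2 * (n - k) = 2 * n - 2 * k)%N by lia.
by rewrite -(mulr_natr _ 'C(n, k)) -(mulr_natr _ 'C(2 * n - 2 * k, n)) natrM; apply: shuffle4.
Qed.


Lemma coef_H (l : F) n :
  ((('X - 1) * ('X - l%:P)) ^+ n)`_n = (-1) ^+ n * \sum_(k < n.+1) ('C(n, k) ^ 2)%:R * l ^+ k.
Proof.
rewrite exprMn coefM big_distrr /=; apply: eq_bigr => j _.
have hj : (j <= n)%N by rewrite -ltnS.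
have e1 : (- 1 : F) ^+ (n - j) *+ 'C(n, j) = (-1) ^+ (n - j) * 'C(n, j)%:R by rewrite mulr_natr.
rewrite -polyC1 !coef_XsubC_exp subKn // bin_sub // (exprNn l).
have -> : (-1 : F) ^+ n = (-1) ^+ (n - j) * (-1) ^+ j by rewrite -exprD subnK.
rewrite e1 -(mulr_natr (_ * _) 'C(n, j)) expnS expn1 natrM.
by apply: shuffle5.
Qed.


Lemma sum_cubic (q : {poly F}) : (size q <= 3)%N ->
  \sum_(v : F) (v * q.[v]) ^+ p.-1./2 = - (q ^+ p.-1./2)`_(p.-1./2).
Proof.
move=> hq; set n := p.-1./2.
have -> : \sum_(v : F) (v * q.[v]) ^+ n = \sum_(v : F) ('X^n * q ^+ n).[v].
  by apply: eq_bigr => v _; rewrite hornerM hornerXn horner_exp exprMn.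
rewrite sum_poly; last first.
  apply: leq_trans (size_polyMleq _ _) _; rewrite size_polyXn addSn /=.
  apply: leq_trans (_ : (n + ((size q).-1 * n).+1 <= _)%N).
    by rewrite leq_add2l size_poly_exp_leq.
  have : ((size q).-1 <= 2)%N by move: hq; case: (size q) => [|[|[|[|]]]].
  have := half_gt0; rewrite -half2 -/n => h0 h2.
  have : ((size q).-1 * n <= 2 * n)%N by rewrite leq_mul2r h2 orbT.
  lia.
rewrite coefXnM -half2 -/n ifN; last by rewrite -leqNgt -addnn leq_addr.
by rewrite -addnn addnK.
Qed.

Lemma two_n1 : (2 * (p.-1./2)%:R + 1 : F) = 0.
Proof.
have : ((p.-1./2).*2.+1)%:R = 0 :> F by rewrite half2 prednK ?prime_gt0 // natrp.
have e : ((p.-1./2).*2.+1 = 2 * p.-1./2 + 1)%N by rewrite addn1 mul2n.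
by rewrite e natrD natrM.
Qed.

Lemma binom_cong k : (k <= p.-1./2)%N ->
  ('C(p.-1./2, k))%:R * (-4) ^+ k = ('C(k.*2, k))%:R :> F.
Proof.
set n := p.-1./2; elim: k => [|k IH] hk; first by rewrite !bin0 expr0 mulr1.
have hk' : (k <= n)%N by apply: ltnW.
have K0 : (k.+1%:R : F) != 0.
  rewrite natrF0; apply/negP => /(dvdn_leq (ltn0Sn _)) h.
  have := leq_trans hk (ltnW half_lt); rewrite -ltnS prednK ?prime_gt0 //.
  by rewrite ltnNge h.
apply: (mulfI K0).
rewrite mulrA -natrM mul_bin_left -natrM central_rec exprS.
rewrite natrM mulrCA -mulrA IH // natrM mulrA; congr (_ * _).
rewrite natrB // mulrC keyF ?two_n1 //.
have e : (k.*2.+1 = 2 * k + 1)%N by rewrite addn1 mul2n.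
by rewrite natrM e natrD natrM.
Qed.

Lemma natF_neq0 m : (0 < m < p)%N -> (m%:R : F) != 0.
Proof.
case/andP=> m0 mp; rewrite natrF0; apply/negP => /(dvdn_leq m0).
by rewrite leqNgt mp.
Qed.

Lemma two0 : (2 : F) != 0.
Proof. by apply: natF_neq0; rewrite /= (ltnW p3). Qed.

Lemma three0 : (3 : F) != 0.
Proof. by apply: natF_neq0; rewrite /= p3. Qed.

Definition PF (T : F) := (2 ^+ p.-1./2)^-1 * \sum_(k < p.-1./2.+1) (-1) ^+ k *
  ('C(p.-1./2, k) * 'C(2 * p.-1./2 - 2 * k, p.-1./2))%:R * T ^+ (p.-1./2 - 2 * k).

Definition HF (T : F) := \sum_(k < p.-1./2.+1) ('C(2 * k, k) ^ 2)%:R * ((1 - T) / 32) ^+ k.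

Definition hcub (T v : F) := v * ((v + T) ^+ 2 - 1).

Definition fcub (T x : F) := x ^+ 3 - 3 * (T ^+ 2 + 3) * x + 2 * T * (T ^+ 2 - 9).

Lemma E_A T : \sum_(v : F) (hcub T v) ^+ p.-1./2 = - (2 ^+ p.-1./2 * PF T).
Proof.
have -> : \sum_(v : F) (hcub T v) ^+ p.-1./2 =
          \sum_(v : F) (v * ((('X + T%:P) ^+ 2 - 1) : {poly F}).[v]) ^+ p.-1./2.
  by apply: eq_bigr => v _; rewrite /hcub !hornerE.
rewrite sum_cubic; last first.
  apply: leq_trans (size_add _ _) _; rewrite geq_max size_polyN size_poly1 andbT.
  by apply: leq_trans (size_poly_exp_leq _ _) _; rewrite size_XaddC.
by rewrite coef_P /PF mulrA mulfV ?mul1r // expf_neq0 // two0.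
Qed.

Lemma E_B T : \sum_(v : F) (hcub T v) ^+ p.-1./2 =
  (-8) ^+ p.-1./2 * \sum_(w : F) (w * ((w - 1) * (w - (1 - T) / 2))) ^+ p.-1./2.
Proof.
have inj : injective (fun w : F => -2 * w + (1 - T)).
  by move=> a b /addIr /(mulfI _); apply; rewrite oppr_eq0 two0.
rewrite (reindex_inj inj) /= big_distrr; apply: eq_bigr => w _.
by rewrite /hcub idB ?two0 // exprMn.
Qed.

Lemma E_C (l : F) : \sum_(w : F) (w * ((w - 1) * (w - l))) ^+ p.-1./2 =
  - ((-1) ^+ p.-1./2 * \sum_(k < p.-1./2.+1) ('C(p.-1./2, k) ^ 2)%:R * l ^+ k).
Proof.
have -> : \sum_(w : F) (w * ((w - 1) * (w - l))) ^+ p.-1./2 =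
          \sum_(w : F) (w * ((('X - 1) * ('X - l%:P)) : {poly F}).[w]) ^+ p.-1./2.
  by apply: eq_bigr => v _; rewrite !hornerE.
rewrite sum_cubic ?coef_H //.
apply: leq_trans (size_polyMleq _ _) _.
by rewrite -polyC1 !size_XsubC.
Qed.

Lemma E_D T : \sum_(k < p.-1./2.+1) ('C(p.-1./2, k) ^ 2)%:R * ((1 - T) / 2) ^+ k = HF T.
Proof.
by apply: eq_bigr => k _; rewrite mul2n !natrX -binom_cong ?idD ?two0 // -ltnS.
Qed.

Lemma PF_HF T : PF T = HF T.
Proof.
have h := E_A T; rewrite E_B E_C E_D in h.
apply: (idPH two0 _ h).
by rewrite mul2n half2 fermat ?two0.
Qed.

Lemma E_E T : \sum_(x : F) (fcub T x) ^+ p.-1./2 =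
  (-27) ^+ p.-1./2 * \sum_(v : F) (hcub T v) ^+ p.-1./2.
Proof.
have inj : injective (fun v : F => -3 * v - 2 * T).
  by move=> a b /addIr /(mulfI _); apply; rewrite oppr_eq0 three0.
rewrite (reindex_inj inj) /= big_distrr; apply: eq_bigr => v _.
by rewrite /fcub /hcub idE exprMn.
Qed.

Lemma RHS2_PF T : - ((-6) ^+ p.-1./2 * \sum_(x : F) (fcub T x) ^+ p.-1./2) = PF T.
Proof.
rewrite E_E E_A idF // mul2n half2 fermat //.
have -> : (18 : F) = 2 * 3 * 3 by rewrite -!natrM.
by rewrite !mulf_neq0 ?two0 ?three0.
Qed.

Lemma sumFp (G : F -> F) : \sum_(0 <= x < p) G x%:R = \sum_(x : F) G x.
Proof.
rewrite big_mkord; have e := Fp_cast pr.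
rewrite [RHS](reindex (cast_ord (esym e))) /=; last first.
  by exists (cast_ord e) => x _; [exact: cast_ordKV | exact: cast_ordK].
apply: eq_bigr => j _; congr G.
by rewrite -[RHS]natr_Zp.
Qed.

Lemma R_one : R 1 1.
Proof. exact: (R_nat 1). Qed.

Ltac rstep Rt :=
  match goal with
  | |- R (_ + _) _ => apply: R_add
  | |- R (- _) _ => apply: R_opp
  | |- R (_ * _) _ => apply: R_mul
  | |- R (_ ^+ _) _ => apply: R_exp
  | |- R (_%:R) _ => exact: R_nat
  | |- R 1 _ => exact: R_one
  | |- R (legendre _ _)%:~R _ => apply: R_legendre
  | |- R (\sum_(_ <- _ | _) _) _ => apply: R_sum => ? _
  | |- R _ _ => exact: Rt
  end.

Ltac rsolve Rt := repeat (rstep Rt).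

Lemma main (t : rat) : in_Zp p t ->
  congp p (legendreP p.-1./2 t)
          (\sum_(0 <= k < p.-1./2.+1) (('C(2 * k, k) ^ 2)%N)%:R * ((1 - t) / 32) ^+ k)
  /\
  congp p (\sum_(0 <= k < p.-1./2.+1) (('C(2 * k, k) ^ 2)%N)%:R * ((1 - t) / 32) ^+ k)
          (- ((legendre p (-6))%:~R
              * \sum_(0 <= x < p)
                  (legendre p (x%:R ^+ 3 - 3 * (t ^+ 2 + 3) * x%:R
                               + 2 * t * (t ^+ 2 - 9)))%:~R)).
Proof.
move=> ht; set T : F := ratr t.
have Rt : R t T by [].
have H1 : R (legendreP p.-1./2 t) (PF T).
  rewrite legendreP_bin /PF; apply: R_mul.
    apply: R_inv; last by rewrite expf_neq0 // two0.
    by apply: R_exp; exact: R_nat.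
  apply: R_sum => k _.
  rsolve Rt.
have H2 : R (\sum_(0 <= k < p.-1./2.+1) (('C(2 * k, k) ^ 2)%N)%:R * ((1 - t) / 32) ^+ k) (HF T).
  rewrite big_mkord /HF; apply: R_sum => k _; apply: R_mul; first exact: R_nat.
  apply: R_exp; apply: R_mul; first by rsolve Rt.
  apply: R_inv; first exact: R_nat.
  have -> : (32 : F) = 2 ^+ 5 by rewrite -natrX.
  by rewrite expf_neq0 // two0.
have H3 : R (- ((legendre p (-6))%:~R
              * \sum_(0 <= x < p)
                  (legendre p (x%:R ^+ 3 - 3 * (t ^+ 2 + 3) * x%:R
                               + 2 * t * (t ^+ 2 - 9)))%:~R))
            (- ((-6) ^+ p.-1./2 * \sum_(x : F) (fcub T x) ^+ p.-1./2)).
  rewrite -(sumFp (fun x => (fcub T x) ^+ p.-1./2)) /fcub.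
  rsolve Rt.
split.
  apply: (R_cong H1); by rewrite PF_HF.
apply: (R_cong H2); by rewrite -PF_HF -RHS2_PF.
Qed.

End Toolkit.

Unset Implicit Arguments.

Theorem theorem2p11 (p : nat) (t : rat) :
  prime p -> (3 < p)%N -> in_Zp p t ->
  congp p (legendreP p.-1./2 t)
          (\sum_(0 <= k < p.-1./2.+1) (('C(2 * k, k) ^ 2)%N)%:R * ((1 - t) / 32) ^+ k)
  /\
  congp p (\sum_(0 <= k < p.-1./2.+1) (('C(2 * k, k) ^ 2)%N)%:R * ((1 - t) / 32) ^+ k)
          (- ((legendre p (-6))%:~R
              * \sum_(0 <= x < p)
                  (legendre p (x%:R ^+ 3 - 3 * (t ^+ 2 + 3) * x%:R
                               + 2 * t * (t ^+ 2 - 9)))%:~R)).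
Proof. by move=> pr p3 ht; apply: main. Qed.
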